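(* Let $\gamma\subset\mathbb{R}^2$ be a circle of center $\boldsymbol{c}$ and radius $R=1/\kappa>0$, and let $\boldsymbol{x}\in\mathbb{R}^2\setminus\gamma$ with distance $r=|\|\boldsymbol{x}-\boldsymbol{c}\|_2-R|>0$ to $\gamma$, and assume $r\kappa<1$. Let $\boldsymbol{n}$ be the unit vector pointing from $\boldsymbol{x}$ to its closest point on $\gamma$, and let $\mathcal{T}$ be the tangent line to $\gamma$ at that closest point. Let $\boldsymbol{v}$ be a unit vector making an angle $\theta\in[0,\pi/2)$ with $\boldsymbol{n}$, let $\boldsymbol{u}=\frac{r}{\cos\theta}\boldsymbol{v}$ (so $\boldsymbol{x}+\boldsymbol{u}\in\mathcal{T}$), and let $\boldsymbol{x}_\gamma=\boldsymbol{x}+t\boldsymbol{v}$ where $t$ is the smallest $t\ge0$ with $\boldsymbol{x}+t\boldsymbol{v}\in\gamma$ (whenever such $t$ exists). Then: (i) whenever $\boldsymbol{x}_\gamma$ exists, $\displaystyle -C_1 r\kappa\tan^2\theta\le\frac{\|\boldsymbol{x}_\gamma-\boldsymbol{x}\|_2}{\|\boldsymbol{u}\|_2}-1$; (ii) if moreover $\tan^2\theta\le\frac{0.2}{r\kappa}$, then $\boldsymbol{x}_\gamma$ exists and $\displaystyle\frac{\|\boldsymbol{x}_\gamma-\boldsymbol{x}\|_2}{\|\boldsymbol{u}\|_2}-1\le C_2r\kappa\tan^2\theta$, with $C_1=0.625$ and $C_2=2.25$. *)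

(* Defs.v *)
From Stdlib Require Import Reals.
Open Scope R_scope.

Definition pt := (R * R)%type.
Definition add (p q : pt) : pt := (fst p + fst q, snd p + snd q).
Definition sub (p q : pt) : pt := (fst p - fst q, snd p - snd q).
Definition scal (a : R) (p : pt) : pt := (a * fst p, a * snd p).
Definition dot (p q : pt) : R := fst p * fst q + snd p * snd q.
Definition norm (p : pt) : R := sqrt (fst p ^ 2 + snd p ^ 2).

Definition on_circle (c : pt) (Rad : R) (p : pt) : Prop := norm (sub p c) = Rad.

Definition is_closest (c : pt) (Rad : R) (x p : pt) : Prop :=
  on_circle c Rad p /\ forall q, on_circle c Rad q -> norm (sub x p) <= norm (sub x q).

Definition first_hit (c : pt) (Rad : R) (x v : pt) (t : R) : Prop :=
  0 <= t /\ on_circle c Rad (add x (scal t v)) /\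
  forall s, 0 <= s < t -> ~ on_circle c Rad (add x (scal s v)).

Definition C1_const : R := 0.625.
Definition C2_const : R := 2.25.

(* Main.v *)
Require Import Defs.
From Stdlib Require Import Reals Lra Psatz.
Open Scope R_scope.
Ltac cb := repeat match goal with H := _ |- _ => clearbody H end.

Lemma norm_eq (a b : R) : norm (a, b) = sqrt (a*a + b*b).
Proof. unfold norm; simpl. f_equal. ring. Qed.

Lemma sq2 (a b : R) : 0 <= a*a + b*b.
Proof. nra. Qed.

Lemma sq2_zero (a b : R) : a*a + b*b = 0 -> a = 0 /\ b = 0.
Proof. intros H. split; apply Rle_antisym; nra. Qed.

Lemma sqrt_eq_sq (y z : R) : 0 <= y -> sqrt y = z -> y = z*z.
Proof. intros Hy H. rewrite <- H. symmetry. apply sqrt_sqrt; lra. Qed.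

Lemma circ_iff (c1 c2 x1 x2 v1 v2 Rad t : R) : 0 < Rad -> v1*v1+v2*v2 = 1 ->
  (on_circle (c1,c2) Rad (add (x1,x2) (scal t (v1,v2))) <->
   t*t + 2*((x1-c1)*v1 + (x2-c2)*v2)*t + ((x1-c1)*(x1-c1) + (x2-c2)*(x2-c2)) - Rad*Rad = 0).
Proof.
  intros HR Hv. unfold on_circle, add, scal, sub; simpl. rewrite norm_eq.
  assert (E : (x1 + t * v1 - c1) * (x1 + t * v1 - c1) + (x2 + t * v2 - c2) * (x2 + t * v2 - c2)
     = t*t*(v1*v1+v2*v2) + 2*((x1-c1)*v1 + (x2-c2)*v2)*t + ((x1-c1)*(x1-c1) + (x2-c2)*(x2-c2))) by ring.
  rewrite Hv in E. split.
  - intros H. apply sqrt_eq_sq in H; [lra|apply sq2].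
  - intros H. replace ((x1 + t * v1 - c1) * (x1 + t * v1 - c1) + (x2 + t * v2 - c2) * (x2 + t * v2 - c2)) with (Rad*Rad) by lra.
    apply sqrt_square; lra.
Qed.

Lemma norm_ray (x1 x2 v1 v2 t : R) : 0 <= t -> v1*v1+v2*v2 = 1 ->
  norm (sub (add (x1,x2) (scal t (v1,v2))) (x1,x2)) = t.
Proof.
  intros Ht Hv. unfold add, scal, sub; simpl. rewrite norm_eq.
  replace ((x1 + t * v1 - x1) * (x1 + t * v1 - x1) + (x2 + t * v2 - x2) * (x2 + t * v2 - x2)) with (t*t)
    by (replace (t*t) with (t*t*(v1*v1+v2*v2)) by (rewrite Hv; ring); ring).
  apply sqrt_square; lra.
Qed.

Lemma norm_scal (v1 v2 k : R) : 0 <= k -> v1*v1+v2*v2 = 1 -> norm (scal k (v1,v2)) = k.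
Proof.
  intros Ht Hv. unfold scal; simpl. rewrite norm_eq.
  replace (k * v1 * (k * v1) + k * v2 * (k * v2)) with (k*k)
    by (replace (k*k) with (k*k*(v1*v1+v2*v2)) by (rewrite Hv; ring); ring).
  apply sqrt_square; lra.
Qed.

Lemma closest_pt (c1 c2 x1 x2 p1 p2 Rad d : R) : 0 < Rad -> 0 < d ->
  d = norm (sub (x1,x2) (c1,c2)) ->
  is_closest (c1,c2) Rad (x1,x2) (p1,p2) ->
  d * (p1 - c1) = Rad * (x1 - c1) /\ d * (p2 - c2) = Rad * (x2 - c2).
Proof.
  intros HR Hd Hdd [Hp Hmin].
  unfold sub in Hdd; simpl in Hdd; rewrite norm_eq in Hdd.
  set (X1 := x1 - c1) in *. set (X2 := x2 - c2) in *.
  assert (Hd2 : d*d = X1*X1 + X2*X2) by (symmetry; apply sqrt_eq_sq; [apply sq2|auto]).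
  unfold on_circle, sub in Hp; simpl in Hp; rewrite norm_eq in Hp.
  set (P1 := p1 - c1) in *. set (P2 := p2 - c2) in *.
  apply sqrt_eq_sq in Hp; [|apply sq2].
  set (k := Rad / d).
  assert (Hk : k * d = Rad) by (unfold k; field; lra).
  specialize (Hmin (c1 + k*X1, c2 + k*X2)).
  assert (Hq : on_circle (c1, c2) Rad (c1 + k * X1, c2 + k * X2)).
  { unfold on_circle, sub; simpl. rewrite norm_eq.
    replace ((c1 + k * X1 - c1) * (c1 + k * X1 - c1) + (c2 + k * X2 - c2) * (c2 + k * X2 - c2)) with (Rad*Rad).
    - apply sqrt_square; lra.
    - rewrite <- Hk. replace (k*d*(k*d)) with (k*k*(d*d)) by ring. rewrite Hd2. ring. }
  specialize (Hmin Hq). unfold sub in Hmin; simpl in Hmin. rewrite !norm_eq in Hmin.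
  apply sqrt_le_0 in Hmin; try apply sq2.
  replace (x1 - p1) with (X1 - P1) in Hmin by (unfold X1, P1; ring).
  replace (x2 - p2) with (X2 - P2) in Hmin by (unfold X2, P2; ring).
  replace (x1 - (c1 + k*X1)) with ((1-k)*X1) in Hmin by (unfold X1; ring).
  replace (x2 - (c2 + k*X2)) with ((1-k)*X2) in Hmin by (unfold X2; ring).
  cb.
  assert (E1 : (1 - k) * X1 * ((1 - k) * X1) + (1 - k) * X2 * ((1 - k) * X2) = d*d - 2*d*Rad + Rad*Rad).
  { rewrite <- Hk. replace ((1 - k) * X1 * ((1 - k) * X1) + (1 - k) * X2 * ((1 - k) * X2)) with
      ((1-k)*(1-k)*(X1*X1+X2*X2)) by ring. rewrite <- Hd2. ring. }
  rewrite E1 in Hmin.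
  assert (HXP : d*Rad <= X1*P1 + X2*P2) by nra.
  assert (Lag : (X1*X1+X2*X2)*(P1*P1+P2*P2) - (X1*P1+X2*P2)*(X1*P1+X2*P2) = (X1*P2 - X2*P1)*(X1*P2-X2*P1)) by ring.
  rewrite <- Hd2, Hp in Lag.
  assert (HXP2 : X1*P1 + X2*P2 = d*Rad).
  { assert (0 <= (X1*P2 - X2*P1)*(X1*P2-X2*P1)) by (pose proof (Rle_0_sqr (X1*P2 - X2*P1)); unfold Rsqr in *; lra).
    assert (0 < d*Rad) by nra. apply Rle_antisym; [|lra]. nra. }
  assert (Z : (d*P1 - Rad*X1)*(d*P1 - Rad*X1) + (d*P2 - Rad*X2)*(d*P2 - Rad*X2) = 0).
  { replace ((d*P1 - Rad*X1)*(d*P1 - Rad*X1) + (d*P2 - Rad*X2)*(d*P2 - Rad*X2)) with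
      (d*d*(P1*P1+P2*P2) - 2*d*Rad*(X1*P1+X2*P2) + Rad*Rad*(X1*X1+X2*X2)) by ring.
    rewrite HXP2, <- Hd2, Hp. ring. }
  apply sq2_zero in Z. destruct Z as [Z1 Z2].
  split; lra.
Qed.
Lemma div_ra (t r a : R) : 0 < r -> 0 < a -> t / (r / a) = t * a / r.
Proof. intros. field. lra. Qed.

Lemma A_in_lower (kappa R r d a t Tn : R) :
  0 < kappa -> R * kappa = 1 -> 0 < a <= 1 -> Tn * (a*a) = 1 - a*a ->
  0 < r -> d = R - r -> 0 < d -> 0 <= t ->
  t*t + 2*d*a*t + d*d - R*R = 0 ->
  - (0.625) * r * kappa * Tn <= t / (r / a) - 1.
Proof.
  intros Hk HRk Ha HT Hr Hd Hd0 Ht Hq.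
  assert (HR : 0 < R) by lra.
  assert (HTn : 0 <= Tn) by nra.
  set (S := t + d*a).
  assert (HS2 : S*S = d*d*a*a + R*R - d*d) by (unfold S; nra).
  assert (Hrd : r = R - d) by lra.
  assert (E1 : t*(S + d*a) = r*(R+d)) by (unfold S; rewrite Hrd; nra).
  assert (E2 : t*(2*R*a*S) <= t*(S*S + R*R*a*a)).
  { apply Rmult_le_compat_l; [lra|]. pose proof (Rle_0_sqr (S - R*a)). unfold Rsqr in *. lra. }
  assert (E3 : (R+d)*(2*R*a*r) <= (R+d)*(t*(2*R*a*a + r*(1-a*a)))).
  { assert (Hid: (R+d)*(t*(2*R*a*a + r*(1-a*a))) = t*(S*S + R*R*a*a) + 2*R*a*(t*(d*a))).
    { rewrite HS2. rewrite Hrd. ring. }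
    rewrite Hid.
    replace ((R+d)*(2*R*a*r)) with (2*R*a*(t*(S+d*a))) by (rewrite E1; ring).
    nra. }
  apply Rmult_le_reg_l in E3; [|lra].
  assert (K : r <= t*a*(1 + r*kappa*Tn/2)).
  { assert (E4 : kappa * (2*R*a*r) <= kappa * (t*(2*R*a*a + r*(1-a*a)))) by (apply Rmult_le_compat_l; lra).
    replace (kappa * (2*R*a*r)) with (2*a*r*(R*kappa)) in E4 by ring.
    rewrite <- HT in E4.
    replace (kappa * (t * (2 * R * a * a + r * (Tn * (a * a))))) with
       (a * (t*a*(2*(R*kappa) + r*kappa*Tn))) in E4 by ring.
    rewrite HRk in E4. nra. }
  set (y := r*kappa*Tn/2) in *.
  assert (Hy : 0 <= y) by (unfold y; apply Rmult_le_pos; [|lra]; apply Rmult_le_pos; nra).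
  assert (K2 : r*(1-y) <= t*a) by nra.
  rewrite div_ra by lra.
  assert (t*a/r >= 1 - y).
  { apply Rle_ge. apply (Rmult_le_reg_l r); [lra|]. field_simplify; [|lra]. lra. }
  unfold y in *. nra.
Qed.
Lemma A_out_lower (kappa R r d a t Tn : R) :
  0 < kappa -> R * kappa = 1 -> 0 < a <= 1 -> Tn * (a*a) = 1 - a*a ->
  0 < r -> d = R + r -> 0 <= t ->
  t*t - 2*d*a*t + d*d - R*R = 0 ->
  - (0.625) * r * kappa * Tn <= t / (r / a) - 1.
Proof.
  intros Hk HRk Ha HT Hr Hd Ht Hq.
  assert (HR : 0 < R) by nra.
  assert (HTn : 0 <= Tn) by nra.
  assert (Hta : r <= t*a).
  { destruct (Rlt_or_le (t*a) r) as [H|H]; [exfalso|exact H].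
    set (s := r / a).
    assert (Hs : s * a = r) by (unfold s; field; lra).
    assert (Hts : t < s).
    { apply (Rmult_lt_reg_r a); lra. }
    assert (Hsr : r <= s).
    { apply (Rmult_le_reg_r a); [lra|]. nra. }
    assert (D1 : d*d*(1-a*a) <= R*R).
    { pose proof (Rle_0_sqr (t - d*a)). unfold Rsqr in *. nra. }
    assert (D2 : d*(1-a*a) <= R).
    { assert (0 <= 1 - a*a <= 1) by nra.
      assert (d*(1-a*a)*(d*(1-a*a)) <= d*d*(1-a*a)) by nra.
      destruct (Rlt_or_le R (d*(1-a*a))) as [H3|H3]; [|exact H3].
      nra. }
    assert (Hsd : s <= d*a).
    { apply (Rmult_le_reg_r a); [lra|]. nra. }
    assert (Fs : 0 <= s*s - 2*d*a*s + d*d - R*R).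
    { replace (s*s - 2*d*a*s + d*d - R*R) with (s*s - 2*d*(s*a) + (d-R)*(d+R)) by ring.
      rewrite Hs. replace (d - R) with r by lra. nra. }
    assert ((t - s)*(t + s - 2*d*a) > 0) by nra.
    nra. }
  rewrite div_ra by lra.
  assert (1 <= t*a/r).
  { apply (Rmult_le_reg_l r); [lra|]. field_simplify; lra. }
  assert (0 <= r*kappa*Tn) by (apply Rmult_le_pos; [|lra]; nra).
  lra.
Qed.
Lemma A_out_upper (kappa R r d a Tn : R) :
  0 < kappa -> R * kappa = 1 -> 0 < a <= 1 -> Tn * (a*a) = 1 - a*a ->
  0 < r -> r * kappa < 1 -> d = R + r -> Tn <= 0.2 / (r * kappa) ->
  exists t, 0 <= t /\ t*t - 2*d*a*t + d*d - R*R = 0 /\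
    (forall s, 0 <= s < t -> s*s - 2*d*a*s + d*d - R*R <> 0) /\
    t / (r / a) - 1 <= 2.25 * r * kappa * Tn.
Proof.
  intros Hk HRk Ha HT Hr Hrk Hd HTb.
  assert (HR : 0 < R) by (cb; nra).
  assert (HTn : 0 <= Tn) by (cb; nra).
  assert (Hrk0 : 0 < r * kappa) by (cb; nra).
  set (y := r*kappa*Tn).
  assert (Hy : y <= 0.2).
  { unfold y. apply (Rmult_le_compat_l (r*kappa)) in HTb; [|lra].
    replace (r * kappa * (0.2 / (r * kappa))) with 0.2 in HTb by (field; lra). lra. }
  assert (Hy0 : 0 <= y) by (unfold y; (cb; nra)).
  set (Q := R*R - d*d*(1-a*a)).
  assert (HQ : 0 <= Q).
  { assert (Hdk : d * kappa = 1 + r*kappa) by (rewrite Hd; lra).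
    assert (E : Q*kappa*kappa = (R*kappa)*(R*kappa) - (d*kappa)*(d*kappa)*(1-a*a)) by (unfold Q; ring).
    rewrite HRk, Hdk, <- HT in E.
    assert (0 <= Q*kappa*kappa).
    { rewrite E. assert (1 = a*a + Tn*(a*a)) by lra.
      assert (H2 : (1 + r*kappa)*(1+r*kappa)*(Tn*(a*a)) = a*a*(Tn + 2*y + r*kappa*y)) by (unfold y; ring).
      rewrite H2. 
      assert (H3 : 0 <= a*a*(1 - 2*y - r*kappa*y)).
      { apply Rmult_le_pos; [(cb; nra)|]. assert (r*kappa*y <= y) by (cb; nra). lra. }
      lra. }
    destruct (Rlt_or_le Q 0) as [H4|H4]; [|exact H4]. exfalso.
    assert (Q*kappa < 0) by (cb; nra). assert (Q*kappa*kappa < 0) by (cb; nra). lra. }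
  set (S := sqrt Q).
  assert (HS2 : S*S = Q) by (apply sqrt_sqrt; lra).
  assert (Hda : 0 < d*a) by (apply Rmult_lt_0_compat; lra).
  assert (HRa : 0 < R*a) by (apply Rmult_lt_0_compat; lra).
  assert (HS0 : 0 <= S) by apply sqrt_pos.
  assert (HSd : S <= d*a).
  { destruct (Rlt_or_le (d*a) S) as [H|H]; [|exact H]. exfalso.
    assert (d*a*(d*a) < S*S) by (cb; nra). unfold Q in HS2. (cb; nra). }
  assert (HSR : S <= R*a).
  { destruct (Rlt_or_le (R*a) S) as [H|H]; [|exact H]. exfalso.
    assert (R*a*(R*a) < S*S) by (cb; nra). unfold Q in HS2.
    assert (R*R <= d*d) by (cb; nra). assert (0 <= 1 - a*a) by (cb; nra).
    assert (0 <= (d*d - R*R)*(1-a*a)) by (apply Rmult_le_pos; lra). (cb; nra). }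
  exists (d*a - S). split; [lra|]. split.
  { replace ((d * a - S) * (d * a - S) - 2 * d * a * (d * a - S) + d * d - R * R)
      with (S*S - Q) by (unfold Q; ring). lra. }
  split.
  { intros s [Hs1 Hs2] Hs.
    assert (Hf : s * s - 2 * d * a * s + d * d - R * R = (s - (d*a - S))*(s - (d*a+S))).
    { assert (X : (s - (d*a - S))*(s - (d*a+S)) = s*s - 2*d*a*s + d*a*(d*a) - S*S) by ring.
      rewrite X, HS2. unfold Q. ring. }
    rewrite Hf in Hs. (cb; nra). }
  set (t := d*a - S).
  assert (E1 : t*(d*a + S) = r*(d+R)).
  { replace (t*(d*a+S)) with (d*a*(d*a) - S*S) by (unfold t; ring). rewrite HS2. unfold Q. rewrite Hd. ring. }
  assert (E2 : Q <= R*a*S) by (cb; nra).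
  assert (E3 : (d+R)*(R*a*a - r*(1-a*a)) <= R*a*(d*a+S)) by (unfold Q in E2; rewrite Hd in *; (cb; nra)).
  assert (E4 : (d+R)*(t*(R*a*a - r*(1-a*a))) <= (d+R)*(R*a*r)).
  { assert (0 <= t) by (unfold t; lra).
    replace ((d+R)*(R*a*r)) with (R*a*(t*(d*a+S))) by (rewrite E1; ring).
    (cb; nra). }
  apply Rmult_le_reg_l in E4; [|lra].
  assert (K : t*a*(1 - y) <= r).
  { rewrite <- HT in E4.
    apply (Rmult_le_compat_l kappa) in E4; [|lra].
    replace (kappa * (t * (R * a * a - r * (Tn * (a * a))))) with (a * (t*a*((R*kappa) - y))) in E4 by (unfold y; ring).
    replace (kappa * (R*a*r)) with (a*(r*(R*kappa))) in E4 by ring.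
    rewrite HRk in E4. apply Rmult_le_reg_l in E4; lra. }
  assert (K1 : 0 <= r*y*(0.25-1.25*y)).
  { apply Rmult_le_pos; [apply Rmult_le_pos|]; lra. }
  assert (K2 : t*a <= r*(1 + 1.25*y)).
  { destruct (Rlt_or_le (r*(1 + 1.25*y)) (t*a)) as [H|H]; [|exact H]. exfalso.
    assert (r*(1 + 1.25*y)*(1-y) < t*a*(1-y)) by (apply Rmult_lt_compat_r; lra).
    lra. }
  rewrite div_ra by lra.
  assert (t*a/r <= 1 + 1.25*y).
  { apply (Rmult_le_reg_l r); [lra|]. field_simplify; lra. }
  unfold y in *. lra.
Qed.

Lemma A_in_upper (kappa R r d a Tn : R) :
  0 < kappa -> R * kappa = 1 -> 0 < a <= 1 -> Tn * (a*a) = 1 - a*a ->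
  0 < r -> d = R - r -> 0 < d ->
  exists t, 0 <= t /\ t*t + 2*d*a*t + d*d - R*R = 0 /\
    (forall s, 0 <= s < t -> s*s + 2*d*a*s + d*d - R*R <> 0) /\
    t / (r / a) - 1 <= 2.25 * r * kappa * Tn.
Proof.
  intros Hk HRk Ha HT Hr Hd Hd0.
  assert (HR : 0 < R) by (cb; nra).
  assert (HTn : 0 <= Tn) by (cb; nra).
  set (Q := R*R - d*d*(1-a*a)).
  assert (Hdd : d*d <= R*R) by (cb; nra). assert (Ha2 : 0 <= 1 - a*a) by (cb; nra).
  assert (0 <= (R*R - d*d)*(1-a*a)) by (apply Rmult_le_pos; lra).
  assert (HQ : R*a*(R*a) <= Q) by (unfold Q; (cb; nra)).
  assert (HQ' : d*a*(d*a) <= Q) by (unfold Q; (cb; nra)).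
  set (S := sqrt Q).
  assert (HS2 : S*S = Q) by (apply sqrt_sqrt; (cb; nra)).
  assert (HS0 : 0 <= S) by apply sqrt_pos.
  assert (Hda : 0 < d*a) by (apply Rmult_lt_0_compat; lra).
  assert (HRa : 0 < R*a) by (apply Rmult_lt_0_compat; lra).
  assert (HSd : d*a <= S) by (cb; nra).
  assert (HSR : R*a <= S) by (cb; nra).
  exists (S - d*a). split; [lra|]. split.
  { replace ((S - d*a) * (S - d*a) + 2 * d * a * (S - d*a) + d * d - R * R)
      with (S*S - Q) by (unfold Q; ring). lra. }
  split.
  { intros s [Hs1 Hs2] Hs.
    assert (Hf : s * s + 2 * d * a * s + d * d - R * R = (s - (S - d*a))*(s + (d*a+S))).
    { assert (X : (s - (S - d*a))*(s + (d*a+S)) = s*s + 2*d*a*s + d*a*(d*a) - S*S) by ring.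
      rewrite X, HS2. unfold Q. ring. }
    rewrite Hf in Hs. (cb; nra). }
  set (t := S - d*a).
  assert (E1 : t*(d*a + S) = r*(d+R)).
  { replace (t*(d*a+S)) with (S*S - d*a*(d*a)) by (unfold t; ring). rewrite HS2. unfold Q. rewrite Hd. ring. }
  assert (K : t*a <= r).
  { assert (0 <= t) by (unfold t; lra).
    assert (Hk2 : (d+R)*(t*a) <= (d+R)*r) by (cb; nra).
    apply Rmult_le_reg_l in Hk2; lra. }
  rewrite div_ra by lra.
  assert (t*a/r <= 1).
  { apply (Rmult_le_reg_l r); [lra|]. field_simplify; lra. }
  assert (0 <= r*kappa*Tn) by (apply Rmult_le_pos; [|lra]; (cb; nra)).
  lra.
Qed.
Theorem lemma4 (c x p v : pt) (kappa theta : R) :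
  0 < kappa ->
  let Rad := 1 / kappa in
  let r := Rabs (norm (sub x c) - Rad) in
  0 < r -> r * kappa < 1 ->
  is_closest c Rad x p ->
  let n := scal (1 / r) (sub p x) in
  norm v = 1 -> 0 <= theta < PI / 2 -> dot v n = cos theta ->
  let u := scal (r / cos theta) v in
  (forall t, first_hit c Rad x v t ->
     - C1_const * r * kappa * (tan theta) ^ 2
       <= norm (sub (add x (scal t v)) x) / norm u - 1) /\
  ((tan theta) ^ 2 <= 0.2 / (r * kappa) ->
     exists t, first_hit c Rad x v t /\
       norm (sub (add x (scal t v)) x) / norm u - 1
         <= C2_const * r * kappa * (tan theta) ^ 2).
Proof.
  destruct c as [c1 c2], x as [x1 x2], p as [p1 p2], v as [v1 v2].
  intros Hk Rad r Hr Hrk Hcl n Hv Hth Hdot u.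
  assert (HRk : Rad * kappa = 1) by (unfold Rad; field; lra).
  assert (HRad : 0 < Rad) by (unfold Rad; apply Rdiv_lt_0_compat; lra).
  assert (Hv2 : v1*v1 + v2*v2 = 1).
  { rewrite norm_eq in Hv. apply sqrt_eq_sq in Hv; [lra|apply sq2]. }
  set (d := norm (sub (x1,x2) (c1,c2))) in *.
  assert (Hrd : r = Rabs (d - Rad)) by reflexivity.
  assert (Hd2 : d*d = (x1-c1)*(x1-c1) + (x2-c2)*(x2-c2)).
  { unfold d, sub; simpl; rewrite norm_eq. apply sqrt_sqrt, sq2. }
  assert (Hd0 : 0 <= d) by (unfold d; unfold norm; apply sqrt_pos).
  assert (Hdpos : 0 < d).
  { destruct (Rle_lt_or_eq_dec 0 d Hd0) as [H|H]; [exact H|exfalso].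
    rewrite <- H in Hrd. replace (0 - Rad) with (- Rad) in Hrd by ring.
    rewrite Rabs_Ropp, Rabs_right in Hrd by lra. rewrite Hrd in Hrk. lra. }
  destruct (closest_pt c1 c2 x1 x2 p1 p2 Rad d HRad Hdpos eq_refl Hcl) as [HP1 HP2].
  set (a := cos theta) in *.
  assert (Ha : 0 < a <= 1).
  { split. apply cos_gt_0; [pose proof PI_RGT_0; lra|lra]. apply COS_bound. }
  set (Tn := tan theta ^ 2) in *.
  assert (HT : Tn * (a*a) = 1 - a*a).
  { unfold Tn, a, tan. pose proof (sin2_cos2 theta) as Hsc. unfold Rsqr in Hsc.
    field_simplify; [|fold a; lra]. lra. }
  set (vX := (x1-c1)*v1 + (x2-c2)*v2).
  assert (HvX : (Rad - d)*vX = a*r*d).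
  { unfold dot, n, scal, sub in Hdot; simpl in Hdot.
    assert (E : v1 * (1 / r * (p1 - x1)) + v2 * (1 / r * (p2 - x2)) =
       (1/r)*(v1*(p1-c1) + v2*(p2-c2) - vX)) by (unfold vX; ring).
    rewrite E in Hdot.
    assert (E2 : d*(v1*(p1-c1) + v2*(p2-c2)) = Rad*vX).
    { replace (d*(v1*(p1-c1) + v2*(p2-c2))) with (v1*(d*(p1-c1)) + v2*(d*(p2-c2))) by ring.
      rewrite HP1, HP2. unfold vX; ring. }
    assert (E3 : v1*(p1-c1) + v2*(p2-c2) - vX = a*r).
    { rewrite <- Hdot. field. lra. }
    replace ((Rad - d)*vX) with (d*(v1*(p1-c1) + v2*(p2-c2)) - d*vX) by (rewrite E2; ring).
    replace (a*r*d) with (d*(a*r)) by ring. rewrite <- E3. ring. }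
  assert (Hcirc : forall t, on_circle (c1,c2) Rad (add (x1,x2) (scal t (v1,v2))) <->
     t*t + 2*vX*t + d*d - Rad*Rad = 0).
  { intros t. rewrite circ_iff by lra. rewrite Hd2. unfold vX. tauto. }
  assert (Hnu : norm u = r / a).
  { unfold u. apply norm_scal; [|exact Hv2]. apply Rlt_le, Rdiv_lt_0_compat; lra. }
  rewrite Hnu. unfold C1_const, C2_const.
  destruct (Rtotal_order d Rad) as [Hlt|[Heq|Hgt]].
  -
    assert (Hr' : r = Rad - d) by (rewrite Hrd, Rabs_left by lra; ring).
    assert (HvX' : vX = a*d).
    { apply (Rmult_eq_reg_l (Rad - d)); [|lra]. rewrite HvX, Hr'. ring. }
    split.
    + intros t [Ht0 [Hon _]]. rewrite norm_ray by assumption.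
      apply Hcirc in Hon. rewrite HvX' in Hon.
      apply (A_in_lower kappa Rad r d a t Tn); try lra.
    + intros _.
      destruct (A_in_upper kappa Rad r d a Tn) as [t [Ht0 [Hq [Hmin Hb]]]]; try lra.
      exists t. split; [|rewrite norm_ray by assumption; exact Hb].
      split; [exact Ht0|]. split.
      * apply Hcirc. rewrite HvX'. lra.
      * intros s Hs Hon. apply Hcirc in Hon. rewrite HvX' in Hon. apply (Hmin s Hs). lra.
  - exfalso. rewrite Heq in Hrd. replace (Rad - Rad) with 0 in Hrd by ring.
    rewrite Rabs_R0 in Hrd. lra.
  -
    assert (Hr' : r = d - Rad) by (rewrite Hrd, Rabs_right by lra; ring).
    assert (HvX' : vX = - (a*d)).
    { apply (Rmult_eq_reg_l (Rad - d)); [|lra]. rewrite HvX, Hr'. ring. }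
    split.
    + intros t [Ht0 [Hon _]]. rewrite norm_ray by assumption.
      apply Hcirc in Hon. rewrite HvX' in Hon.
      apply (A_out_lower kappa Rad r d a t Tn); try lra.
    + intros HTb.
      destruct (A_out_upper kappa Rad r d a Tn) as [t [Ht0 [Hq [Hmin Hb]]]]; try lra.
      exists t. split; [|rewrite norm_ray by assumption; exact Hb].
      split; [exact Ht0|]. split.
      * apply Hcirc. rewrite HvX'. lra.
      * intros s Hs Hon. apply Hcirc in Hon. rewrite HvX' in Hon. apply (Hmin s Hs). lra.
Qed.
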